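(* Let $q\ge2$, $r\ge1$, $\rho\ge 2$ be integers, $N=r+\rho-1$, and let $\mathcal{C}$ be a $q$-ary $(n,k,r,\rho)$ LRC code with minimum distance $d$. Let $\mu=\lceil (n-(d-1))/N\rceil+1$. Then: (1) (locality-dependent Hamming bound) $$k\le \mu\Big(N-\log_q\Big(\sum_{e=0}^{\lfloor(\rho-1)/2\rfloor}\binom Ne (q-1)^e\Big)\Big);$$ (2) (locality-dependent Plotkin bound) if $\rho>\frac{q-1}{q}N$, then $$k\le \mu\log_q\frac{\rho}{\rho-\frac{q-1}{q}N};$$ (3) (locality-dependent Singleton bound) $$k\le \mu r.$$
   Context: A $q$-ary code of length $n$ is a subset $\mathcal{C}\subseteq Q^n$, $|Q|=q$; its minimum distance is the minimum Hamming distance between distinct codewords and its dimension is $k=\log_q|\mathcal{C}|$. For $I\subseteq[n]$, $\mathcal{C}_I$ is the projection of $\mathcal{C}$ onto the coordinates in $I$. $\mathcal{C}$ (of cardinality $q^k$) is an $(n,k,r,\rho)$ LRC code if every coordinate $i\in[n]$ lies in a subset $\mathcal{R}_i\subseteq[n]$ of size at most $r+\rho-1$ such that $\mathcal{C}_{\mathcal{R}_i}$ has minimum distance at least $\rho$. *)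

(* Defs.v *)
From mathcomp Require Import all_boot.
From Stdlib Require Import Reals.
Set Implicit Arguments. Unset Strict Implicit. Unset Printing Implicit Defensive.

Definition hdist (T : eqType) (n : nat) (x y : {ffun 'I_n -> T}) : nat :=
  #|[set i : 'I_n | x i != y i]|.

Definition proj (T : eqType) (n : nat) (I : {set 'I_n}) (x : {ffun 'I_n -> T})
  : {ffun 'I_n -> option T} :=
  [ffun i => if i \in I then Some (x i) else None].

Definition proj_code (T : finType) (n : nat) (I : {set 'I_n})
  (C : {set {ffun 'I_n -> T}}) : {set {ffun 'I_n -> option T}} :=
  [set proj I x | x in C].

Definition min_dist_ge (T : finType) (n : nat) (C : {set {ffun 'I_n -> T}})
  (rho : nat) : Prop :=
  forall x y, x \in C -> y \in C -> x != y -> rho <= hdist x y.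

Definition is_min_dist (T : finType) (n : nat) (C : {set {ffun 'I_n -> T}})
  (d : nat) : Prop :=
  min_dist_ge C d /\
  exists x y, [/\ x \in C, y \in C, x != y & hdist x y = d].

(* C is an (n,k,r,rho) LRC code (k being log_q |C|). *)
Definition is_LRC (T : finType) (n : nat) (C : {set {ffun 'I_n -> T}})
  (r rho : nat) : Prop :=
  forall i : 'I_n, exists R : {set 'I_n},
    [/\ i \in R, #|R| <= r + rho - 1 & min_dist_ge (proj_code R C) rho].

Definition logb (q x : R) : R := (ln x / ln q)%R.

Definition code_dim (T : finType) (n : nat) (C : {set {ffun 'I_n -> T}}) : R :=
  logb (INR #|T|) (INR #|C|).

(* Main.v *)
Require Import Defs.
From mathcomp Require Import all_boot.
From Stdlib Require Import Reals.
From Stdlib Require Lra Lia.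
From mathcomp Require Import zify.
Set Implicit Arguments. Unset Strict Implicit. Unset Printing Implicit Defensive.

Module Aux.
From Stdlib Require Import Lra Lia.

Lemma card_fam (T Q : finType) (F : T -> pred Q) :
  #|(finfun.family F : simpl_pred {ffun T -> Q})| = \prod_j #|F j|.
Proof. by rewrite card_family foldrE big_map big_enum. Qed.

Definition dA (Q : eqType) n (A : {set 'I_n}) (x y : {ffun 'I_n -> Q}) :=
  #|[set j in A | x j != y j]|.

Definition Wc (Q : finType) n (A : {set 'I_n}) (c : {ffun 'I_n -> Q}) :=
  [set y : {ffun 'I_n -> Q} | [forall j, (j \notin A) ==> (y j == c j)]].

Lemma card_Wc (Q : finType) n (A : {set 'I_n}) (c : {ffun 'I_n -> Q}) : #|Wc A c| = expn #|Q| #|A|.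
Proof.
set F := (fun j => if j \in A then predT else pred1 (c j)).
have -> : #|Wc A c| = #|(finfun.family F : simpl_pred {ffun 'I_n -> Q})|.
  apply: eq_card => y; rewrite inE; apply/forallP/familyP => H j; move: (H j);
  by rewrite /F; case: (j \in A) => //= /eqP.
rewrite card_fam (bigID (mem A)) /=.
rewrite (eq_bigr (fun _ => #|Q|)); last by move=> j Hj; rewrite /F Hj; apply: eq_card => v.
rewrite [X in _ * X]big1 ?muln1; last by move=> j /negbTE Hj; rewrite /F Hj card1.
by rewrite prod_nat_const.
Qed.

Lemma test (a b : nat) : a <= b -> a * 2 <= b + b.
Proof. lia. Qed.


Definition Dset (Q : eqType) n (A : {set 'I_n}) (x y : {ffun 'I_n -> Q}) :=
  [set j in A | x j != y j].

Lemma card_shell (Q : finType) n (A : {set 'I_n}) (c x : {ffun 'I_n -> Q}) (B : {set 'I_n}) e :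
  x \in Wc A c -> B \subset A -> #|B| <= e ->
  #|[set y in Wc A c | (dA A x y <= e) && (Dset A x y == B)]| = expn (#|Q| - 1) #|B|.
Proof.
move=> xW BA Be.
set F := (fun j => if j \in B then predC1 (x j) else pred1 (x j)).
have -> : #|[set y in Wc A c | (dA A x y <= e) && (Dset A x y == B)]|
   = #|(finfun.family F : simpl_pred {ffun 'I_n -> Q})|.
  apply: eq_card => y; rewrite !inE.
  move: xW; rewrite inE => /forallP xW.
  apply/andP/familyP.
  - move=> [/forallP yW /andP [_ /eqP DB]] j; rewrite /F -DB /Dset !inE.
    have := yW j; have := xW j.
    case: (j \in A) => /=.
      by move=> _ _; case: eqP => /= [->|/eqP]; rewrite !inE // eq_sym.
    by move=> /eqP -> /eqP ->; rewrite inE.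
  - move=> H; split.
      apply/forallP => j; apply/implyP => jA.
      have := H j; rewrite /F.
      have -> : (j \in B) = false by apply/negbTE; apply: contra jA; apply: (subsetP BA).
      by rewrite inE => /eqP ->; have := xW j; rewrite jA.
    have DB : Dset A x y = B.
      apply/setP => j; rewrite /Dset !inE.
      have := H j; rewrite /F.
      case jB: (j \in B); rewrite inE.
        by rewrite (subsetP BA _ jB) eq_sym.
      by move=> /eqP ->; rewrite eqxx andbF.
    by rewrite /dA -/(Dset A x y) DB Be eqxx.
rewrite card_fam (bigID (mem B)) /=.
rewrite (eq_bigr (fun _ => #|Q| - 1)); last by move=> j Hj; rewrite /F Hj cardC1 subn1.
rewrite [X in _ * X]big1 ?muln1; last by move=> j /negbTE Hj; rewrite /F Hj card1.
by rewrite prod_nat_const.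
Qed.

Lemma card_ball (Q : finType) n (A : {set 'I_n}) (c x : {ffun 'I_n -> Q}) e :
  x \in Wc A c ->
  #|[set y in Wc A c | dA A x y <= e]| = \sum_(i < e.+1) 'C(#|A|, i) * expn (#|Q| - 1) i.
Proof.
move=> xW.
rewrite -sum1_card.
rewrite (partition_big (fun y => Dset A x y) (fun B => (B \subset A) && (#|B| <= e))); last first.
  move=> y; rewrite !inE => /andP [_ He]; apply/andP; split => //.
  by apply/subsetP => j; rewrite inE => /andP [].
transitivity (\sum_(B : {set 'I_n} | (B \subset A) && (#|B| <= e)) expn (#|Q| - 1) #|B|).
  apply: eq_bigr => B /andP [BA Be].
  rewrite sum1_card -(card_shell xW BA Be); apply: eq_card => y.
  by rewrite [in LHS]unfold_in /= !inE andbA.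
rewrite (partition_big (fun B : {set 'I_n} => (inord #|B| : 'I_e.+1)) predT) //.
apply: eq_bigr => i _.
rewrite (eq_bigl (fun B : {set 'I_n} => (B \subset A) && (#|B| == i))); last first.
  move=> B; apply/andP/andP => [[/andP [BA Be] /eqP <-]|[BA /eqP Bi]].
    by split => //; rewrite inordK.
  split; first by rewrite BA /= Bi -ltnS.
  by apply/eqP/val_inj; rewrite /= inordK Bi // ltnS -Bi.
rewrite (eq_bigr (fun _ => expn (#|Q| - 1) i)); last by move=> B /andP [_ /eqP ->].
rewrite sum_nat_const.
congr (_ * _).
by rewrite -cards_draws; apply: eq_card => B; rewrite inE.
Qed.

Lemma dA_sym (Q : eqType) n (A : {set 'I_n}) (x y : {ffun 'I_n -> Q}) : dA A x y = dA A y x.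
Proof. by rewrite /dA; apply: eq_card => j; rewrite !inE eq_sym. Qed.

Lemma dA_tri (Q : eqType) n (A : {set 'I_n}) (x y z : {ffun 'I_n -> Q}) :
  dA A x z <= dA A x y + dA A y z.
Proof.
rewrite /dA; apply: leq_trans (leq_card_setU _ _).
apply: subset_leq_card; apply/subsetP => j; rewrite !inE => /andP [jA xz].
rewrite jA /=; case: (eqVneq (x j) (y j)) => [xy|] //=.
by rewrite -xy.
Qed.

Lemma count_sub (T : finType) (S : pred T) (P : pred T) :
  #|[set x in S | P x]| = \sum_(x in S) (if P x then 1 else 0).
Proof.
rewrite -sum1_card [LHS]big_mkcond [RHS]big_mkcond; apply: eq_bigr => y _.
by rewrite !inE; case: (y \in S); case: (P y).
Qed.

Lemma hamming_small (Q : finType) n (A : {set 'I_n}) (c : {ffun 'I_n -> Q})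
  (D : {set {ffun 'I_n -> Q}}) e :
  (forall x, x \in D -> x \in Wc A c) ->
  (forall x y, x \in D -> y \in D -> x != y -> e + e < dA A x y) ->
  #|D| * (\sum_(i < e.+1) 'C(#|A|, i) * expn (#|Q| - 1) i) <= expn #|Q| #|A|.
Proof.
move=> DW Dd.
rewrite -sum_nat_const.
rewrite (eq_bigr (fun x => \sum_(y in Wc A c) (if dA A x y <= e then 1 else 0))); last first.
  by move=> x xD; rewrite -(card_ball e (DW x xD)) count_sub.
rewrite exchange_big /= -(card_Wc A c) -sum1_card.
apply: leq_sum => y yW.
rewrite -count_sub.
apply/card_le1_eqP => x1 x2; rewrite !inE => /andP [x1D h1] /andP [x2D h2].
apply/eqP; apply: contraT => ne.
have := Dd _ _ x1D x2D; rewrite eq_sym ne => /(_ isT).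
have := dA_tri A x1 y x2; rewrite (dA_sym A y x2).
lia.
Qed.

Lemma exists_subset (T : finType) (A : {set T}) k : k <= #|A| ->
  exists B : {set T}, B \subset A /\ #|B| = k.
Proof.
move=> kA.
have : 0 < #|[set B : {set T} | B \subset A & #|B| == k]| by rewrite cards_draws bin_gt0.
case/card_gt0P => B; rewrite inE => /andP [BA /eqP Bk]; by exists B.
Qed.

Lemma singleton_small (Q : finType) n (A : {set 'I_n}) (c : {ffun 'I_n -> Q})
  (D : {set {ffun 'I_n -> Q}}) rho : 0 < rho ->
  (forall x, x \in D -> x \in Wc A c) ->
  (forall x y, x \in D -> y \in D -> x != y -> rho <= dA A x y) ->
  #|D| <= expn #|Q| (#|A| + 1 - rho).
Proof.
move=> rho0 DW Dd.
have [A' [A'A A'k]] := @exists_subset _ A (#|A| + 1 - rho) ltac:(lia).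
pose pi (x : {ffun 'I_n -> Q}) : {ffun 'I_n -> Q} := [ffun j => if j \in A' then x j else c j].
have inj : {in D &, injective pi}.
  move=> x1 x2 x1D x2D e12; apply/eqP; apply: contraT => ne.
  have := Dd _ _ x1D x2D ne.
  have : dA A x1 x2 <= #|A :\: A'|.
    apply: subset_leq_card; apply/subsetP => j; rewrite !inE => /andP [jA ne'].
    rewrite jA andbT; apply: contra ne' => jA'.
    by have := congr1 (fun f : {ffun 'I_n -> Q} => f j) e12; rewrite /pi !ffunE jA' => ->.
  rewrite cardsD (setIidPr A'A) A'k. lia.
rewrite -(card_in_imset inj) -A'k -(card_Wc A' c).
apply: subset_leq_card; apply/subsetP => y /imsetP [x xD ->].
rewrite inE; apply/forallP => j; apply/implyP => jA'.
by rewrite ffunE (negbTE jA').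
Qed.

Lemma cauchy_nat (T : finType) (f : T -> nat) :
  (\sum_i f i) * (\sum_i f i) <= #|T| * \sum_i f i * f i.
Proof.
rewrite -(leq_pmul2l (isT : 0 < 2)).
have -> : 2 * (#|T| * \sum_i f i * f i) = \sum_i \sum_j (f i * f i + f j * f j).
  rewrite [RHS](eq_bigr (fun i => #|T| * (f i * f i) + \sum_j f j * f j)); last first.
    by move=> i _; rewrite big_split /= sum_nat_const.
  rewrite big_split /= sum_nat_const -big_distrr /=. rewrite (@eq_card _ _ T) //; lia.
have -> : 2 * ((\sum_i f i) * (\sum_i f i)) = \sum_i \sum_j 2 * (f i * f j).
  rewrite big_distrl /= big_distrr /=; apply: eq_bigr => i _.
  rewrite big_distrr /= big_distrr /=; apply: eq_bigr => j _; lia.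
apply: leq_sum => i _; apply: leq_sum => j _; by have := (nat_Cauchy (f i) (f j)).1; rewrite -!mulnn.
Qed.

Lemma col_sq (Q : finType) n (D : {set {ffun 'I_n -> Q}}) (j : 'I_n) :
  #|D| * #|D| <= #|Q| * \sum_(x in D) \sum_(y in D) (if x j == y j then 1 else 0).
Proof.
pose nv v := #|[set x in D | x j == v]|.
have HM : #|D| = \sum_v nv v.
  rewrite -sum1_card (partition_big (fun x : {ffun 'I_n -> Q} => x j) predT) //.
  by apply: eq_bigr => v _; rewrite sum1_card /nv; apply: eq_card => x; rewrite !inE.
have HE : \sum_(x in D) \sum_(y in D) (if x j == y j then 1 else 0) = \sum_v nv v * nv v.
  rewrite (eq_bigr (fun x : {ffun 'I_n -> Q} => nv (x j))); last first.
    by move=> x _; rewrite /nv count_sub; apply: eq_bigr => y _; rewrite eq_sym.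
  rewrite (partition_big (fun x : {ffun 'I_n -> Q} => x j) predT) //.
  apply: eq_bigr => v _.
  rewrite (eq_bigr (fun _ => nv v)); last by move=> x /andP [_ /eqP ->].
  rewrite sum_nat_const; congr (_ * _); apply: eq_card => x; rewrite !inE.
  done.
rewrite HE HM; exact: cauchy_nat.
Qed.

Lemma plotkin_small (Q : finType) n (A : {set 'I_n})
  (D : {set {ffun 'I_n -> Q}}) rho :
  (forall x y, x \in D -> y \in D -> x != y -> rho <= dA A x y) ->
  #|Q| * ((#|D| - 1) * rho) <= #|A| * (#|Q| - 1) * #|D|.
Proof.
move=> Dd.
set M := #|D|.
pose S := \sum_(x in D) \sum_(y in D) dA A x y.
have low : M * ((M - 1) * rho) <= S.
  rewrite /M -sum_nat_const; apply: leq_sum => x xD.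
  rewrite (big_setD1 x xD) /= -(addn0 ((#|D| - 1) * rho)) addnC leq_add //.
  have -> : #|D| - 1 = #|D :\ x| by rewrite (cardsD1 x D) xD add1n subn1.
  rewrite -sum_nat_const; apply: leq_sum => y; rewrite !inE => /andP [yx yD].
  by apply: Dd; rewrite // eq_sym.
have up : #|Q| * S <= #|A| * ((#|Q| - 1) * (M * M)).
  have -> : S = \sum_(j in A) \sum_(x in D) \sum_(y in D) (if x j != y j then 1 else 0).
    rewrite /S (eq_bigr (fun x : {ffun 'I_n -> Q} => \sum_(j in A) \sum_(y in D) (if x j != y j then 1 else 0))).
      by rewrite exchange_big.
    move=> x _; rewrite exchange_big; apply: eq_bigr => y _; exact: count_sub.
  rewrite big_distrr /= -sum_nat_const; apply: leq_sum => j _.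
  have hc := col_sq D j.
  have hs : \sum_(x in D) \sum_(y in D) (if x j != y j then 1 else 0)
          + \sum_(x in D) \sum_(y in D) (if x j == y j then 1 else 0) = M * M.
    rewrite -big_split /= /M -sum_nat_const; apply: eq_bigr => x _.
    rewrite -big_split /= -sum1_card; apply: eq_bigr => y _.
    by case: (x j == y j).
  move: hc hs; rewrite -/M.
  set T1 := \sum_(x in D) \sum_(y in D) (if x j != y j then 1 else 0).
  set T2 := \sum_(x in D) \sum_(y in D) (if x j == y j then 1 else 0).
  move=> hc hs; rewrite mulnBl mul1n -hs mulnDr.
  move: hc; rewrite -hs; move: (#|Q| * T1) (#|Q| * T2) (T1 + T2) => a b z; lia.
case: M low up => [|m] low up; first by rewrite sub0n !mul0n muln0.
rewrite -(leq_pmul2r (isT : 0 < m.+1)).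
have h1 : #|Q| * (m.+1 * ((m.+1 - 1) * rho)) <= #|Q| * S by rewrite leq_mul2l low orbT.
apply: leq_trans (_ : #|Q| * (m.+1 * ((m.+1 - 1) * rho)) <= _).
  by rewrite -mulnA (mulnC _ m.+1).
apply: leq_trans h1 _; apply: leq_trans up _.
by rewrite !mulnA.
Qed.


Lemma ln_le' (x y : R) : (0 < x)%R -> (x <= y)%R -> (ln x <= ln y)%R.
Proof.
move=> x0 [xy|->]; last by apply: Rle_refl.
by apply: Rlt_le; apply: ln_increasing.
Qed.

Lemma nINR_pos m : 0 < m -> (0 < INR m)%R.
Proof. by move=> /ltP h; apply: lt_0_INR. Qed.

Lemma nINR_le m p : m <= p -> (INR m <= INR p)%R.
Proof. by move=> /leP h; apply: le_INR. Qed.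

Lemma nINR_mul m p : INR (m * p) = (INR m * INR p)%R.
Proof. by rewrite -mult_INR. Qed.

Lemma nINR_add m p : INR (m + p) = (INR m + INR p)%R.
Proof. by rewrite -plus_INR. Qed.

Lemma le1_agree (Q : finType) n (C S : {set {ffun 'I_n -> Q}}) d (F : {set 'I_n}) :
  min_dist_ge C d -> 0 < d -> S \subset C -> n - d < #|F| ->
  (forall x y, x \in S -> y \in S -> forall j, j \in F -> x j = y j) ->
  #|S| <= 1.
Proof.
move=> md d0 SC Fbig ag.
apply/card_le1_eqP => x y xS yS; apply/eqP; apply: contraT => ne.
have := md _ _ (subsetP SC _ xS) (subsetP SC _ yS); rewrite eq_sym ne => /(_ isT).
have : hdist x y <= #|~: F|.
  apply: subset_leq_card; apply/subsetP => j; rewrite !inE; apply: contra => jF.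
  by rewrite (ag _ _ xS yS _ jF).
have := cardsC F; rewrite card_ord.
lia.
Qed.

Section Core.
Variables (Q : finType) (n : nat) (C : {set {ffun 'I_n -> Q}}) (r rho d : nat) (lam : R).
Hypotheses (HL : is_LRC C r rho) (HD : min_dist_ge C d) (d0 : 0 < d) (dn : d <= n)
  (lam0 : (0 <= lam)%R).
Hypothesis HB : forall (c : {ffun 'I_n -> Q}) (A : {set 'I_n}) (D : {set {ffun 'I_n -> Q}}),
     0 < #|A| -> #|A| <= r + rho - 1 -> 0 < #|D| ->
     (forall x, x \in D -> x \in Wc A c) ->
     (forall x y, x \in D -> y \in D -> x != y -> rho <= dA A x y) ->
     (ln (INR #|D|) <= lam * INR #|A|)%R.

Lemma core_ind s : forall (F : {set 'I_n}) (S : {set {ffun 'I_n -> Q}}),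
  n - #|F| <= s -> S \subset C -> 0 < #|S| ->
  (forall x y, x \in S -> y \in S -> forall j, j \in F -> x j = y j) ->
  (ln (INR #|S|) <= lam * INR ((n - d - #|F|) + (r + rho - 1)))%R.
Proof.
elim: s => [|s IH] F S Fs SC S0 ag.
- have S1 : #|S| = 1.
    have Fbig : n - d < #|F| by lia.
    have := le1_agree HD d0 SC Fbig ag; lia.
  rewrite S1 /= ln_1; apply: Rmult_le_pos => //; apply: pos_INR.
have [Fbig|Fsmall] := ltnP (n - d) #|F|.
  have S1 : #|S| = 1 by have := le1_agree HD d0 SC Fbig ag; lia.
  rewrite S1 /= ln_1; apply: Rmult_le_pos => //; apply: pos_INR.
have : 0 < #|~: F| by have := cardsC F; rewrite card_ord; lia.
case/card_gt0P => i; rewrite inE => iF.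
have [R [iR Rsz Rmd]] := HL i.
set A := R :\: F.
have iA : i \in A by rewrite inE iF.
have A0 : 0 < #|A| by apply/card_gt0P; exists i.
have AN : #|A| <= r + rho - 1 by apply: leq_trans Rsz; apply: subset_leq_card; apply: subsetDl.
have [x0 x0S] : exists x0, x0 \in S by apply/card_gt0P.
pose pi (x : {ffun 'I_n -> Q}) : {ffun 'I_n -> Q} := [ffun j => if j \in A then x j else x0 j].
set D := pi @: S.
have D0 : 0 < #|D| by apply/card_gt0P; exists (pi x0); apply: imset_f.
have DW : forall u, u \in D -> u \in Wc A x0.
  move=> u /imsetP [x _ ->]; rewrite inE; apply/forallP => j; apply/implyP => jA.
  by rewrite ffunE (negbTE jA).
have Dd : forall u v, u \in D -> v \in D -> u != v -> rho <= dA A u v.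
  move=> u v /imsetP [x xS ->] /imsetP [y yS ->] ne.
  have -> : dA A (pi x) (pi y) = dA A x y.
    by apply: eq_card => j; rewrite !inE !ffunE inE; case: (j \notin F) => //; case: (j \in R).
  have pne : proj R x != proj R y.
    apply: contra ne => /eqP pe; apply/eqP/ffunP => j; rewrite !ffunE.
    case jA: (j \in A) => //.
    have jR : j \in R by move: jA; rewrite inE => /andP [].
    by have := congr1 (fun f : {ffun 'I_n -> option Q} => f j) pe; rewrite !ffunE jR => -[].
  have := Rmd _ _ (imset_f (proj R) (subsetP SC _ xS)) (imset_f (proj R) (subsetP SC _ yS)) pne.
  move/leq_trans; apply; apply: subset_leq_card; apply/subsetP => j; rewrite !inE !ffunE.
  case jR: (j \in R) => //= hne.
  have jF : j \notin F by apply: contra hne => jF; rewrite (ag _ _ xS yS _ jF).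
  by rewrite jF /=; apply: contra hne => /eqP ->.
have lnD := HB A0 AN D0 DW Dd.
pose f p := #|[set x in S | pi x == p]|.
have [p pD pmax] : exists2 p, p \in D & forall u, u \in D -> f u <= f p.
  by case: (@arg_maxnP _ (pi x0) (mem D) f (imset_f pi x0S)) => p pD pm; exists p.
have Sle : #|S| <= #|D| * f p.
  rewrite -sum1_card (partition_big pi (mem D)) /=; last by move=> x xS; apply: imset_f.
  rewrite -sum_nat_const; apply: leq_sum => u uD.
  apply: leq_trans (pmax u uD); rewrite sum1_card /f; apply: subset_leq_card.
  by apply/subsetP => x; rewrite !inE.
set S' := [set x in S | pi x == p].
have S'C : S' \subset C.
  by apply/subsetP => x; rewrite inE => /andP [xS _]; apply: (subsetP SC).
have S'0 : 0 < #|S'|.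
  case/imsetP: pD => x xS px; apply/card_gt0P; exists x; by rewrite inE xS px eqxx.
have ag' : forall x y, x \in S' -> y \in S' -> forall j, j \in F :|: A -> x j = y j.
  move=> x y; rewrite !inE => /andP [xS /eqP px] /andP [yS /eqP py] j; rewrite inE.
  case/orP => [jF|jA]; first exact: ag.
  have := congr1 (fun f : {ffun 'I_n -> Q} => f j) (etrans px (esym py)).
  by rewrite /pi !ffunE jA.
have cardF' : #|F :|: A| = #|F| + #|A|.
  have FA0 : F :&: A = set0.
    by apply/setP => j; rewrite !inE; case: (j \in F); rewrite ?andbF.
  by have := cardsU F A; rewrite FA0 cards0 subn0.
have lnS : (ln (INR #|S|) <= ln (INR #|D|) + ln (INR #|S'|))%R.
  rewrite -ln_mult; try exact: nINR_pos.
  apply: ln_le'; first exact: nINR_pos.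
  by rewrite -nINR_mul; apply: nINR_le.
have [F'big|F'small] := ltnP (n - d) #|F :|: A|.
  have S'1 : #|S'| = 1 by have := le1_agree HD d0 S'C F'big ag'; lia.
  move: lnS; rewrite S'1 /= ln_1 Rplus_0_r => lnS.
  apply: Rle_trans lnS _; apply: Rle_trans lnD _.
  apply: Rmult_le_compat_l => //; apply: nINR_le; lia.
have le_s : n - #|F :|: A| <= s by lia.
have H := IH _ _ le_s S'C S'0 ag'.
have -> : (n - d - #|F|) + (r + rho - 1) = #|A| + ((n - d - #|F :|: A|) + (r + rho - 1)) by lia.
rewrite nINR_add Rmult_plus_distr_l.
apply: Rle_trans lnS _; exact: Rplus_le_compat.
Qed.
End Core.


Local Open Scope nat_scope.

Lemma concave_avg (g : nat -> R) (N : nat) : g 0%N = 0%R ->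
  (forall b, b.+2 <= N -> (g b.+2 - g b.+1 <= g b.+1 - g b)%R) ->
  forall a, a <= N -> (INR a * g N <= INR N * g a)%R.
Proof.
move=> g0 conc.
pose del b := (g b.+1 - g b)%R.
have mono : forall k j, j + k < N -> (del (j + k)%nat <= del j)%R.
  elim => [|k IH] j jk; first by rewrite addn0; apply: Rle_refl.
  apply: Rle_trans (IH j _); last lia.
  rewrite addnS /del; apply: conc; lia.
have step2 : forall a c, a <= c -> c < N -> (INR a * del c <= g a)%R.
  elim => [|a IH] c ac cN; first by rewrite g0 /=; lra.
  have h1 := IH c (ltnW ac) cN.
  have h2 : (del c <= del a)%R.
    have -> : c = a + (c - a) by lia.
    apply: mono; lia.
  rewrite S_INR.
  have -> : g a.+1 = (g a + del a)%R by rewrite /del; lra.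
  lra.
have step3 : forall k a, a + k <= N -> (INR a * g (a + k)%nat <= INR (a + k)%nat * g a)%R.
  move=> k a; elim: k => [|k IH] akN; first by rewrite addn0; apply: Rle_refl.
  have h1 : (INR a * g (a + k)%nat <= INR (a + k)%nat * g a)%R by apply: IH; lia.
  have h2 : (INR a * del (a + k)%nat <= g a)%R by apply: step2; lia.
  rewrite addnS S_INR.
  have -> : g (a + k).+1 = (g (a + k)%nat + del (a + k)%nat)%R by rewrite /del; lra.
  lra.
move=> a aN.
have := @step3 (N - a) a ltac:(lia).
by have -> : (a + (N - a))%nat = N by lia.
Qed.


Local Open Scope nat_scope.

Definition Vs (w e b : nat) := \sum_(i < e.+1) 'C(b, i) * expn w i.
Definition Ys (w e b : nat) := \sum_(i < e) 'C(b, i) * expn w i.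

Lemma Vs_split w e b : Vs w e b = Ys w e b + 'C(b, e) * expn w e.
Proof. by rewrite /Vs big_ord_recr. Qed.

Lemma Vs_succ w e b : Vs w e b.+1 = Vs w e b + w * Ys w e b.
Proof.
rewrite /Vs /Ys !big_ord_recl /= !bin0 -addnA; congr (_ + _).
rewrite big_distrr -big_split /=; apply: eq_bigr => i _.
rewrite /bump /= add1n binS expnS; lia.
Qed.

Lemma bin_term b e i : i < e -> 'C(b, e) * 'C(b.+1, i) <= 'C(b.+1, e) * 'C(b, i).
Proof.
move=> ie.
have [eb|be] := leqP e b; last by rewrite bin_small.
have h1 := mul_bin_down b.+1 i.
have h2 := mul_bin_down b.+1 e.
rewrite /= in h1 h2.
have p1 : 0 < b.+1 - i by lia.
rewrite -(leq_pmul2r p1).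
have : 'C(b, e) * 'C(b.+1, i) * (b.+1 - i) = 'C(b.+1, e) * 'C(b, i) * (b.+1 - e).
  move: h1 h2; move: (b.+1 - i) (b.+1 - e) ('C(b, e)) ('C(b.+1, i)) ('C(b.+1, e)) ('C(b, i)) => u v ce ci1 ce1 ci h1 h2.
  rewrite -mulnA (mulnC ci1 u) -h1 -[in RHS]mulnA [in RHS](mulnC ci v) [in RHS]mulnCA.
  by rewrite mulnA (mulnC ce) h2 -mulnA.
move=> ->; rewrite leq_mul2l; apply/orP; right; lia.
Qed.

Lemma Vs_logconcave w e b : Vs w e b * Vs w e b.+2 <= Vs w e b.+1 * Vs w e b.+1.
Proof.
have key : 'C(b, e) * expn w e * Ys w e b.+1 <= 'C(b.+1, e) * expn w e * Ys w e b.
  rewrite /Ys !big_distrr /=; apply: leq_sum => i _.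
  rewrite mulnACA [X in _ <= X]mulnACA; apply: leq_mul (leqnn _); exact: bin_term.
rewrite [Vs w e b.+2]Vs_succ [in X in _ <= X * _]Vs_succ.
have s0 := Vs_split w e b; have s1 := Vs_split w e b.+1.
move: key s0 s1.
move: (Vs w e b) (Vs w e b.+1) (Ys w e b) (Ys w e b.+1) ('C(b, e) * expn w e) ('C(b.+1, e) * expn w e) => X0 X1 Y0 Y1 T0 T1.
move=> key -> ->.
have h : (Y0 + T0) * Y1 <= Y0 * (Y1 + T1) by nia.
have h2 := leq_mul (leqnn w) h.
move: h2; move: (Y0 + T0) (Y1 + T1) => A B h2.
rewrite mulnDr mulnDl leq_add2l.
by rewrite mulnCA -mulnA.
Qed.


Local Open Scope nat_scope.

Lemma core (Q : finType) n (C : {set {ffun 'I_n -> Q}}) r rho d (lam : R) :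
  is_LRC C r rho -> min_dist_ge C d -> 0 < d -> d <= n -> (0 <= lam)%R ->
  (forall (c : {ffun 'I_n -> Q}) (A : {set 'I_n}) (D : {set {ffun 'I_n -> Q}}),
     0 < #|A| -> #|A| <= r + rho - 1 -> 0 < #|D| ->
     (forall x, x \in D -> x \in Wc A c) ->
     (forall x y, x \in D -> y \in D -> x != y -> rho <= dA A x y) ->
     (ln (INR #|D|) <= lam * INR #|A|)%R) ->
  0 < #|C| ->
  (ln (INR #|C|) <= lam * INR ((n - d) + (r + rho - 1)))%R.
Proof.
move=> HL HD d0 dn lam0 HB C0.
have := @core_ind Q n C r rho d lam HL HD d0 dn lam0 HB n set0 C.
rewrite cards0 => h; have e : n - d - 0 = n - d by rewrite subn0.
rewrite -e; apply: h => //; first by rewrite subn0.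
by move=> x y _ _ j; rewrite inE.
Qed.

Lemma le_div (u v N : R) : (0 < N)%R -> (u * N <= v)%R -> (u <= v / N)%R.
Proof.
move=> N0 h; apply: (Rmult_le_reg_r N) => //.
have -> : (v / N * N = v)%R by field; lra.
done.
Qed.

Lemma finish (L Lam x N mu lq : R) : (0 <= Lam)%R -> (0 < N)%R -> (0 < lq)%R ->
  (L <= Lam / N * x)%R -> (x <= N * mu)%R -> (L / lq <= mu * (Lam / lq))%R.
Proof.
move=> L0 N0 q0 h1 h2.
have h3 : (L <= Lam * mu)%R.
  apply: Rle_trans h1 _.
  have -> : (Lam / N * x = Lam * (x / N))%R by field; lra.
  apply: Rmult_le_compat_l => //.
  have -> : mu = (N * mu / N)%R by field; lra.
  apply: Rmult_le_compat_r; last done.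
  by apply: Rlt_le; apply: Rinv_0_lt_compat.
have -> : (mu * (Lam / lq) = (Lam * mu) / lq)%R by field; lra.
apply: Rmult_le_compat_r => //.
by apply: Rlt_le; apply: Rinv_0_lt_compat.
Qed.

Lemma expn_pow m k : expn m k = Nat.pow m k.
Proof. by elim: k => // k IH; rewrite expnS IH. Qed.


Local Open Scope nat_scope.

Lemma INR_expn m k : INR (expn m k) = (INR m ^ k)%R.
Proof. by rewrite expn_pow pow_INR. Qed.

Lemma HB_singleton (Q : finType) n r rho (c : {ffun 'I_n -> Q}) (A : {set 'I_n})
  (D : {set {ffun 'I_n -> Q}}) :
  1 < #|Q| -> 0 < r -> 1 < rho ->
  0 < #|A| -> #|A| <= r + rho - 1 -> 0 < #|D| ->
  (forall x, x \in D -> x \in Wc A c) ->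
  (forall x y, x \in D -> y \in D -> x != y -> rho <= dA A x y) ->
  (ln (INR #|D|) <= (INR r * ln (INR #|Q|)) / INR (r + rho - 1) * INR #|A|)%R.
Proof.
move=> q2 r0 rho2 A0 AN D0 DW Dd.
have lq : (0 < ln (INR #|Q|))%R.
  rewrite -ln_1; apply: ln_increasing; first lra.
  have := nINR_le q2; rewrite /= => h; lra.
have N0 : (0 < INR (r + rho - 1))%R by apply: nINR_pos; lia.
have h := singleton_small (ltnW rho2) DW Dd.
apply: Rle_trans (ln_le' (nINR_pos D0) (nINR_le h)) _.
rewrite INR_expn ln_pow; last by apply: nINR_pos; lia.
have -> : (INR r * ln (INR #|Q|) / INR (r + rho - 1) * INR #|A|
   = (INR r * INR #|A| * ln (INR #|Q|)) / INR (r + rho - 1))%R by field; lra.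
apply: le_div => //.
rewrite Rmult_assoc (Rmult_comm (ln _)) -Rmult_assoc.
apply: Rmult_le_compat_r; first lra.
rewrite -!nINR_mul; apply: nINR_le.
have [small|big] := leqP (#|A| + 1) rho.
  by have -> : #|A| + 1 - rho = 0 by lia.
nia.
Qed.

Lemma Vs_gt0 w e b : 0 < Vs w e b.
Proof. by rewrite /Vs big_ord_recl bin0 expn0. Qed.

Lemma Vs0 w e : Vs w e 0 = 1.
Proof.
by rewrite /Vs big_ord_recl bin0 expn0 big1 // => i _; rewrite bin0n.
Qed.

Lemma Vs_le w e b : Vs w e b <= expn w.+1 b.
Proof.
elim: b => [|b IH]; first by rewrite Vs0.
rewrite Vs_succ expnS.
have := Vs_split w e b.
move: (Vs w e b) (Ys w e b) IH => V Y IH hs.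
have hy : Y <= V by lia.
have := leq_mul (leqnn w) hy.
nia.
Qed.

Lemma Vs_concave w e N a : a <= N ->
  (INR a * ln (INR (Vs w e N)) <= INR N * ln (INR (Vs w e a)))%R.
Proof.
apply: (concave_avg (g := fun b => ln (INR (Vs w e b)))).
  by rewrite Vs0 /= ln_1.
move=> b _.
have h := Vs_logconcave w e b.
have p0 := nINR_pos (Vs_gt0 w e b).
have p1 := nINR_pos (Vs_gt0 w e b.+1).
have p2 := nINR_pos (Vs_gt0 w e b.+2).
have := nINR_le h; rewrite !nINR_mul => h'.
have := ln_le' (Rmult_lt_0_compat _ _ p0 p2) h'.
rewrite !ln_mult //.
lra.
Qed.

Lemma HB_hamming (Q : finType) n r rho (c : {ffun 'I_n -> Q}) (A : {set 'I_n})
  (D : {set {ffun 'I_n -> Q}}) :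
  1 < #|Q| -> 0 < r -> 1 < rho ->
  0 < #|A| -> #|A| <= r + rho - 1 -> 0 < #|D| ->
  (forall x, x \in D -> x \in Wc A c) ->
  (forall x y, x \in D -> y \in D -> x != y -> rho <= dA A x y) ->
  (ln (INR #|D|) <= (INR (r + rho - 1) * ln (INR #|Q|)
      - ln (INR (Vs (#|Q| - 1) (rho - 1)./2 (r + rho - 1)))) / INR (r + rho - 1) * INR #|A|)%R.
Proof.
move=> q2 r0 rho2 A0 AN D0 DW Dd.
set Nn := r + rho - 1.
set e := (rho - 1)./2.
have q0 : (0 < INR #|Q|)%R by apply: nINR_pos; lia.
have N0 : (0 < INR Nn)%R by apply: nINR_pos; rewrite /Nn; lia.
have ee : e + e < rho.
  have := halfK (rho - 1); rewrite -/e; case: (odd (rho - 1)) => /=; rewrite -addnn; lia.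
have h := hamming_small (e := e) DW (fun x y xD yD ne => leq_trans ee (Dd x y xD yD ne)).
have hv : #|Q| - 1 + 1 = #|Q| by lia.
have := nINR_le h; rewrite -/(Vs (#|Q| - 1) e #|A|) nINR_mul INR_expn => h'.
have := ln_le' (Rmult_lt_0_compat _ _ (nINR_pos D0) (nINR_pos (Vs_gt0 (#|Q| - 1) e #|A|))) h'.
rewrite ln_mult ?ln_pow //; try exact: nINR_pos; try exact: (nINR_pos (Vs_gt0 _ _ _)).
move=> h1.
have h2 := Vs_concave (#|Q| - 1) e AN.
rewrite -/Nn in h2.
have -> : ((INR Nn * ln (INR #|Q|) - ln (INR (Vs (#|Q| - 1) e Nn))) / INR Nn * INR #|A|
   = ((INR Nn * ln (INR #|Q|) - ln (INR (Vs (#|Q| - 1) e Nn))) * INR #|A|) / INR Nn)%R by field; lra.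
apply: le_div => //.
have h1' := Rmult_le_compat_r (INR Nn) _ _ (Rlt_le _ _ N0) h1.
lra.
Qed.

Lemma HB_plotkin (Q : finType) n r rho (c : {ffun 'I_n -> Q}) (A : {set 'I_n})
  (D : {set {ffun 'I_n -> Q}}) :
  1 < #|Q| -> 0 < r -> 1 < rho ->
  (INR rho > (INR #|Q| - 1) / INR #|Q| * INR (r + rho - 1))%R ->
  0 < #|A| -> #|A| <= r + rho - 1 -> 0 < #|D| ->
  (forall x, x \in D -> x \in Wc A c) ->
  (forall x y, x \in D -> y \in D -> x != y -> rho <= dA A x y) ->
  (ln (INR #|D|) <= (ln (INR rho) - ln (INR rho - (INR #|Q| - 1) / INR #|Q| * INR (r + rho - 1))) / INR (r + rho - 1) * INR #|A|)%R.
Proof.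
move=> q2 r0 rho2 Hp A0 AN D0 DW Dd.
set Nn := r + rho - 1 in Hp AN *.
set th := ((INR #|Q| - 1) / INR #|Q|)%R in Hp *.
have q1 : (1 < INR #|Q|)%R by have := nINR_le q2; rewrite /= => h; lra.
have th0 : (0 <= th)%R.
  rewrite /th; apply: Rmult_le_pos; first lra.
  by apply: Rlt_le; apply: Rinv_0_lt_compat; lra.
have thq : (th * INR #|Q| = INR #|Q| - 1)%R by rewrite /th; field; lra.
have N0 : (0 < INR Nn)%R by apply: nINR_pos; rewrite /Nn; lia.
have rh0 : (0 < INR rho)%R by apply: nINR_pos; lia.
pose P b := (INR rho - th * INR b)%R.
have Ppos : forall b, b <= Nn -> (0 < P b)%R.
  move=> b bN; have := nINR_le bN => hb; rewrite /P.
  have : (th * INR b <= th * INR Nn)%R by apply: Rmult_le_compat_l.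
  lra.
have hp := plotkin_small Dd.
have hM : (INR #|D| * P #|A| <= INR rho)%R.
  have := nINR_le hp; rewrite !nINR_mul !minus_INR; last (by apply/leP; lia); last (by apply/leP; lia).
  move=> h; apply: (Rmult_le_reg_r (INR #|Q|)); first lra.
  rewrite /P.
  have -> : (INR #|D| * (INR rho - th * INR #|A|) * INR #|Q|
     = INR #|Q| * INR #|D| * INR rho - INR #|A| * (th * INR #|Q|) * INR #|D|)%R by ring.
  rewrite thq; have e1 : INR 1 = 1%R by []. rewrite e1 in h; lra.
have lnM : (ln (INR #|D|) + ln (P #|A|) <= ln (INR rho))%R.
  rewrite -ln_mult; [|exact: nINR_pos|exact: Ppos].
  apply: ln_le' => //; apply: Rmult_lt_0_compat; [exact: nINR_pos|exact: Ppos].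
have hg : forall b, b.+2 <= Nn -> (ln (P b.+2) - ln (INR rho) - (ln (P b.+1) - ln (INR rho)) <=
                                ln (P b.+1) - ln (INR rho) - (ln (P b) - ln (INR rho)))%R.
  move=> b bN.
  have p0 := Ppos b ltac:(lia). have p1 := Ppos b.+1 ltac:(lia). have p2 := Ppos b.+2 ltac:(lia).
  have : (P b * P b.+2 <= P b.+1 * P b.+1)%R.
    rewrite /P !S_INR; nra.
  move=> h; have := ln_le' (Rmult_lt_0_compat _ _ p0 p2) h.
  rewrite !ln_mult //; lra.
have g0 : (ln (P 0%nat) - ln (INR rho) = 0)%R by rewrite /P /= Rmult_0_r Rminus_0_r; lra.
have H := @concave_avg (fun b => ln (P b) - ln (INR rho))%R Nn g0 hg #|A| AN.
rewrite /= in H.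
have -> : ((ln (INR rho) - ln (INR rho - th * INR Nn)) / INR Nn * INR #|A|
   = ((ln (INR rho) - ln (P Nn)) * INR #|A|) / INR Nn)%R by rewrite /P; field; lra.
apply: le_div => //.
have lnM' := Rmult_le_compat_r (INR Nn) _ _ (Rlt_le _ _ N0) lnM.
move: H lnM'; move: (ln (INR #|D|)) (ln (P #|A|)) (ln (INR rho)) (ln (P Nn)) (INR #|A|) (INR Nn) => x1 x2 x3 x4 x5 x6. move=> h1 h2; lra.
Qed.

End Aux.
Import Aux.

Theorem corollary1 (q r rho n d : nat) (Q : finType)
  (C : {set {ffun 'I_n -> Q}}) :
  #|Q| = q -> (2 <= q)%N -> (1 <= r)%N -> (2 <= rho)%N ->
  is_LRC C r rho -> is_min_dist C d ->
  let N := (r + rho - 1)%N in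
  (* mu = ceil((n - (d - 1)) / N) + 1 *)
  let mu := ((n - (d - 1) + N - 1) %/ N + 1)%N in
  let k := code_dim C in
  [/\ (k <= INR mu * (INR N - logb (INR q)
          (INR (\sum_(0 <= e < (rho - 1)./2 + 1) 'C(N, e) * expn (q - 1) e))))%R,
      (INR rho > (INR q - 1) / INR q * INR N ->
       k <= INR mu * logb (INR q)
              (INR rho / (INR rho - (INR q - 1) / INR q * INR N)))%R
    & (k <= INR mu * INR r)%R].
Proof.
move=> Hq q2 r1 rho2 HL [HD [x [y [xC yC xy hxy]]]] N mu k.
have d0 : (0 < d)%N.
  rewrite -hxy /hdist lt0n cards_eq0; apply: contra xy => /eqP H.
  apply/eqP/ffunP => j; apply/eqP; apply: contraT => ne.
  have : j \in [set i | x i != y i] by rewrite inE.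
  by rewrite H inE.
have dn : (d <= n)%N by rewrite -hxy; apply: leq_trans (max_card _) _; rewrite card_ord.
have C0 : (0 < #|C|)%N by apply/card_gt0P; exists x.
have q2' : (1 < #|Q|)%N by rewrite Hq.
have lq : (0 < ln (INR q))%R.
  rewrite -ln_1; apply: ln_increasing; first by Lra.lra.
  have := nINR_le q2; rewrite /= => h; Lra.lra.
have N0 : (0 < INR N)%R by apply: nINR_pos; rewrite /N; Lia.lia.
have xmu : (INR ((n - d) + N) <= INR N * INR mu)%R.
  rewrite -nINR_mul; apply: nINR_le; rewrite /mu.
  have -> : (n - (d - 1) + N - 1 = (n - d) + N)%N by rewrite /N; Lia.lia.
  have := @ltn_ceil ((n - d) + N) N ltac:(rewrite /N; Lia.lia).
  move: ((n - d + N) %/ N) => t; Lia.nia.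
rewrite /k /code_dim Hq.
split.
- have hsum : (\sum_(0 <= e < (rho - 1)./2 + 1) 'C(N, e) * expn (q - 1) e
      = Vs (q - 1) (rho - 1)./2 N)%N by rewrite /Vs big_mkord addn1.
  rewrite hsum.
  have Vp : (0 < INR (Vs (q - 1) (rho - 1)./2 N))%R by apply: nINR_pos; apply: Vs_gt0.
  have Lam0 : (0 <= INR N * ln (INR q) - ln (INR (Vs (q - 1) (rho - 1)./2 N)))%R.
    have h := Vs_le (q - 1) (rho - 1)./2 N.
    have e1 : (q - 1).+1 = q by Lia.lia.
    rewrite e1 in h.
    have := ln_le' Vp (nINR_le h); rewrite INR_expn ln_pow; last by apply: nINR_pos; Lia.lia.
    move=> h'; Lra.lra.
  have l0 : (0 <= (INR (r + rho - 1) * ln (INR #|Q|) - ln (INR (Vs (#|Q| - 1) (rho - 1)./2 (r + rho - 1)))) / INR (r + rho - 1))%R.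
    rewrite Hq -/N; apply: Rmult_le_pos => //; by apply: Rlt_le; apply: Rinv_0_lt_compat.
  have hc := @core Q n C r rho d _ HL HD d0 dn
     l0 (fun c A D A0 AN D0 DW Dd => HB_hamming q2' r1 rho2 A0 AN D0 DW Dd) C0.
  rewrite Hq -/N in hc.
  have -> : (INR N - logb (INR q) (INR (Vs (q - 1) (rho - 1)./2 N))
     = (INR N * ln (INR q) - ln (INR (Vs (q - 1) (rho - 1)./2 N))) / ln (INR q))%R.
    by rewrite /logb; field; Lra.lra.
  rewrite /logb; exact: (finish Lam0 N0 lq hc xmu).
- move=> Hp.
  have Hp' : (INR rho > (INR #|Q| - 1) / INR #|Q| * INR (r + rho - 1))%R by rewrite Hq.
  have q0 : (1 < INR q)%R by have := nINR_le q2; rewrite /= => h; Lra.lra.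
  have th0 : (0 <= (INR q - 1) / INR q)%R.
    apply: Rmult_le_pos; first Lra.lra.
    by apply: Rlt_le; apply: Rinv_0_lt_compat; Lra.lra.
  have thN : (0 <= (INR q - 1) / INR q * INR N)%R by apply: Rmult_le_pos => //; exact: pos_INR.
  have PN : (0 < INR rho - (INR q - 1) / INR q * INR N)%R by move: Hp; clear; move=> Hp; Lra.lra.
  have Lam0 : (0 <= ln (INR rho) - ln (INR rho - (INR q - 1) / INR q * INR N))%R.
    have le : (INR rho - (INR q - 1) / INR q * INR N <= INR rho)%R by Lra.lra.
    have := ln_le' PN le; Lra.lra.
  have l0 : (0 <= (ln (INR rho) - ln (INR rho - (INR #|Q| - 1) / INR #|Q| * INR (r + rho - 1))) / INR (r + rho - 1))%R.
    rewrite Hq -/N; apply: Rmult_le_pos => //; by apply: Rlt_le; apply: Rinv_0_lt_compat.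
  have hc := @core Q n C r rho d _ HL HD d0 dn
     l0 (fun c A D A0 AN D0 DW Dd => HB_plotkin q2' r1 rho2 Hp' A0 AN D0 DW Dd) C0.
  rewrite Hq -/N in hc.
  rewrite /logb /Rdiv ln_mult; last by apply: Rinv_0_lt_compat.
    rewrite ln_Rinv // -/(Rminus _ _) -/(Rdiv _ _) -/(Rdiv (ln (INR #|C|)) _).
    exact: (finish Lam0 N0 lq hc xmu).
  by apply: nINR_pos; Lia.lia.
- have l0 : (0 <= INR r * ln (INR #|Q|) / INR (r + rho - 1))%R.
    rewrite Hq -/N; apply: Rmult_le_pos; last by apply: Rlt_le; apply: Rinv_0_lt_compat.
    apply: Rmult_le_pos; [exact: pos_INR | exact: Rlt_le].
  have hc := @core Q n C r rho d (INR r * ln (INR #|Q|) / INR (r + rho - 1)) HL HD d0 dn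
     l0 (fun c A D A0 AN D0 DW Dd => HB_singleton q2' r1 rho2 A0 AN D0 DW Dd) C0.
  rewrite Hq -/N in hc.
  have -> : INR r = (INR r * ln (INR q) / ln (INR q))%R by field; Lra.lra.
  rewrite /logb; apply: (finish _ N0 lq hc xmu).
  apply: Rmult_le_pos; [exact: pos_INR | exact: Rlt_le].
Qed.
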